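(* Let $\kappa,\nu,\mu,\theta$ be cardinals, and suppose that a partition $p:[\kappa]^2\to\mu$ and a coloring $c:[\kappa]^2\to\theta$ have a common coarsening $q:[\kappa]^2\to\nu$ that is not constant. Then $c$ does not witness $\kappa\nrightarrow_p[\kappa]^2_\theta$.
   Context: $[\kappa]^2$ denotes the set of pairs $(\alpha,\beta)$ with $\alpha<\beta<\kappa$. For functions $q:X\to\nu$ and $p:X\to\mu$, $q$ is a coarsening of $p$ iff $p(x)=p(y)$ implies $q(x)=q(y)$ for all $x,y\in X$. Given a partition $p:[\kappa]^2\to\mu$, a coloring $c:[\kappa]^2\to\theta$ witnesses $\kappa\nrightarrow_p[\kappa]^2_\theta$ iff for every $A\subseteq\kappa$ with $|A|=\kappa$ and every function $\tau:\mu\to\theta$ there is a pair $(\alpha,\beta)$ with $\alpha<\beta$ both in $A$ such that $c(\alpha,\beta)=\tau(p(\alpha,\beta))$. *)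

(* Defs.v *)
(* A cardinal kappa is modelled as a type K equipped with a
   strict well-order lt that is an initial ordinal (no element's proper
   initial segment is equinumerous to K). The other cardinals nu, mu, theta
   are modelled as arbitrary types (sets of colours). Functions on [kappa]^2
   are curried functions K -> K -> X, of which only the values at pairs
   (a, b) with lt a b matter. *)
From Stdlib Require Import Relations Wellfounded.

Definition is_cardinal (K : Type) (lt : K -> K -> Prop) : Prop :=
  (forall a, ~ lt a a) /\
  (forall a b c, lt a b -> lt b c -> lt a c) /\
  (forall a b, lt a b \/ a = b \/ lt b a) /\
  well_founded lt /\
  (forall a : K, ~ exists f : K -> {b : K | lt b a},
       forall x y, f x = f y -> x = y).

Definition coarsening {K X Y : Type} (lt : K -> K -> Prop)
  (q : K -> K -> Y) (p : K -> K -> X) : Prop :=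
  forall a b a' b', lt a b -> lt a' b' ->
    p a b = p a' b' -> q a b = q a' b'.

Definition nonconstant {K Y : Type} (lt : K -> K -> Prop)
  (q : K -> K -> Y) : Prop :=
  exists a b a' b', lt a b /\ lt a' b' /\ q a b <> q a' b'.

Definition full_size {K : Type} (A : K -> Prop) : Prop :=
  exists f : {x : K | A x} -> K,
    (forall x y, f x = f y -> x = y) /\ (forall k, exists x, f x = k).

Definition witnesses {K M Th : Type} (lt : K -> K -> Prop)
  (p : K -> K -> M) (c : K -> K -> Th) : Prop :=
  forall A : K -> Prop, full_size A ->
  forall tau : M -> Th,
    exists a b, A a /\ A b /\ lt a b /\ c a b = tau (p a b).

(* Main.v *)
Require Import Defs.
From Stdlib Require Import Classical ClassicalEpsilon.

Theorem proposition2p2 (K : Type) (lt : K -> K -> Prop) (N M Th : Type)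
  (p : K -> K -> M) (c : K -> K -> Th) (q : K -> K -> N) :
  is_cardinal K lt ->
  coarsening lt q p -> coarsening lt q c -> nonconstant lt q ->
  ~ witnesses lt p c.
Proof.
  intros _ Hp Hc [a1 [b1 [a2 [b2 [H1 [H2 Hq]]]]]] W.
  assert (Ex : forall m, exists t, forall a b, lt a b -> p a b = m -> c a b <> t).
  { intro m.
    destruct (classic (exists a b, lt a b /\ p a b = m)) as [[a [b [Hab Hm]]]|Hn].
    - destruct (classic (q a1 b1 = q a b)) as [E|E].
      + exists (c a2 b2). intros x y Hxy Hxm Hc'.
        apply Hq. rewrite E. rewrite <- (Hc _ _ _ _ Hxy H2 Hc').
        apply Hp; auto; congruence.
      + exists (c a1 b1). intros x y Hxy Hxm Hc'.
        apply E. rewrite <- (Hc _ _ _ _ Hxy H1 Hc').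
        apply Hp; auto; congruence.
    - exists (c a1 b1). intros x y Hxy Hxm _. apply Hn. eauto. }
  set (tau := fun m => proj1_sig (constructive_indefinite_description _ (Ex m))).
  assert (Ht : forall m a b, lt a b -> p a b = m -> c a b <> tau m).
  { intro m. unfold tau. destruct (constructive_indefinite_description _ (Ex m)). simpl. auto. }
  destruct (W (fun _ => True)) with (tau := tau) as [a [b [_ [_ [Hab E]]]]].
  - exists (@proj1_sig K (fun _ => True)). split.
    + intros [x []] [y []]. simpl. intros ->. reflexivity.
    + intro k. exists (exist _ k I). reflexivity.
  - exact (Ht _ a b Hab eq_refl E).
Qed.
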